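(* Let $\ell$ and $s$ be positive integers. If a partial $(n,k,t)_\lambda$-system has an $\ell$-presequencing with $s$ classes, then it has a nondeficient $\ell$-presequencing with $s$ classes, provided that \[ n > \lambda\left(2\binom{2\ell-3}{t}-\binom{\ell-2}{t}\right)\binom{k-1}{t}^{-1}+(2s-1)(\ell-1)-1. \]
   Context: For positive integers $n,k,t,\lambda$ with $n \geq k > t \geq 2$, a partial $(n,k,t)_\lambda$-system is a pair $(X,\mathcal{B})$ where $X$ is an $n$-set of vertices and $\mathcal{B}$ is a collection of $k$-subsets of $X$ (blocks) such that each $t$-subset of $X$ is contained in at most $\lambda$ blocks. An independent set is a subset of $X$ containing no block. An $\ell$-buffered set is a triple $(S,S^{L},S^{R})$ with $S^{L},S^{R}\subseteq S$ (buffers) such that: (B1) if $|S|\le \ell-2$ then $S^{L}=S^{R}=S$; (B2) if $\ell-1\le |S|\le 2\ell-2$ then $|S^{L}|=|S^{R}|=\ell-1$ and $S^{L}\cup S^{R}=S$; (B3) if $|S|\ge 2\ell-1$ then $|S^{L}|=|S^{R}|=\ell-1$ and $S^{L}\cap S^{R}=\emptyset$. It is deficient if $|S|\le \ell-2$ and nondeficient otherwise. An $\ell$-presequencing of $(X,\mathcal{B})$ is a tuple $(X_0,\ldots,X_{s-1})$ of $\ell$-buffered sets (classes) whose underlying sets partition $X$, such that (P1) each $X_i$ is independent, and (P2) for each $i\in\mathbb{Z}_s$, $X_i^{R}\cup X_{i+1}^{L}$ is independent (indices mod $s$). It is nondeficient if every class is nondeficient. Binomial coefficients $\binom{a}{t}$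 with $0\le a<t$ equal $0$. *)

(* Defs.v *)
From mathcomp Require Import all_boot all_order all_algebra.
Set Implicit Arguments. Unset Strict Implicit. Unset Printing Implicit Defensive.

Section Defs.
Variable X : finType.

Definition partial_system (n k t lam : nat) (B : {set {set X}}) : Prop :=
  #|X| = n /\
  (forall b, b \in B -> #|b| = k) /\
  (forall T : {set X}, #|T| = t -> #|[set b in B | T \subset b]| <= lam).

Definition independent (B : {set {set X}}) (A : {set X}) : Prop :=
  forall b, b \in B -> ~~ (b \subset A).

(* (S, SL, SR) is an l-buffered set.  Integer inequalities are written
   without truncated subtraction: |S| <= l-2  <->  |S|+2 <= l, etc. *)
Definition buffered (l : nat) (S SL SR : {set X}) : Prop :=
  SL \subset S /\ SR \subset S /\
  (#|S| + 2 <= l -> SL = S /\ SR = S) /\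
  (l <= #|S| + 1 -> #|S| + 2 <= 2 * l ->
     #|SL| + 1 = l /\ #|SR| + 1 = l /\ SL :|: SR = S) /\
  (2 * l <= #|S| + 1 ->
     #|SL| + 1 = l /\ #|SR| + 1 = l /\ [disjoint SL & SR]).

Definition deficient (l : nat) (S : {set X}) : bool := #|S| + 2 <= l.

Definition presequencing (l s : nat) (B : {set {set X}})
  (S SL SR : 'I_s -> {set X}) : Prop :=
  (forall i, buffered l (S i) (SL i) (SR i)) /\
  (forall i j, i != j -> [disjoint S i & S j]) /\
  (\bigcup_(i < s) S i = [set: X]) /\
  (forall i, independent B (S i)) /\
  (forall i, independent B (SR i :|: SL (@ordS s i))).

Definition nondeficient_presequencing (l s : nat) (B : {set {set X}})
  (S SL SR : 'I_s -> {set X}) : Prop :=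
  @presequencing l s B S SL SR /\ (forall i, ~~ deficient l (S i)).

End Defs.

Arguments presequencing {X} l s B S SL SR.
Arguments nondeficient_presequencing {X} l s B S SL SR.

(* Main.v *)
Require Import Defs.
From mathcomp Require Import all_boot all_order all_algebra.
From mathcomp Require Import zify.
Import GRing.Theory Num.Theory.

Lemma binC_step m t c : 'C(c + m, t) - 'C(c, t) <= 'C(c.+1 + m, t) - 'C(c.+1, t).
Proof.
case: t => [|t]; first by rewrite !bin0.
rewrite addSn !binS.
have h1 := leq_bin2l t (leq_addr m c).
have h2 := leq_bin2l t.+1 (leq_addr m c).
lia.
Qed.

Lemma binC_diff c y m a t : c <= y -> a <= c + m ->
  'C(a, t) - 'C(c, t) <= 'C(y + m, t) - 'C(y, t).
Proof.
move=> hcy ha.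
apply: leq_trans (leq_sub2r _ (leq_bin2l t ha)) _.
elim: y hcy => [|y IH]; first by rewrite leqn0 => /eqP ->.
rewrite leq_eqVlt => /orP[/eqP -> //|]; rewrite ltnS => /IH h.
exact: leq_trans h (binC_step _ _ _).
Qed.

Section S.
Variable X : finType.
Implicit Types (A : {set X}) (B : {set {set X}}).

Lemma indep_sub B A A' : independent B A -> A' \subset A -> independent B A'.
Proof.
move=> ind sub b bB; apply/negP => bA'; move: (ind b bB).
by rewrite (subset_trans bA' sub).
Qed.

Lemma card_bigcup_le (I : finType) (P : pred I) (F : I -> {set X}) :
  #|\bigcup_(i | P i) F i| <= \sum_(i | P i) #|F i|.
Proof.
apply: (big_ind2 (fun (A : {set X}) n => #|A| <= n)); first by rewrite cards0.
  move=> A1 n1 A2 n2 h1 h2; apply: leq_trans (leq_card_setU A1 A2) _.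
  exact: leq_add.
by [].
Qed.

Lemma indep_add1 B A b v : independent B A -> b \in B -> b \subset v |: A ->
  v \in b /\ b :\ v \subset A.
Proof.
move=> ind bB bsub.
have vb : v \in b.
  apply/negPn/negP => vnb; move: (ind b bB) => /negP; apply.
  apply/subsetP => y yb; move/subsetP: bsub => /(_ y yb).
  rewrite !inE => /orP[/eqP eq|//]; by move: vnb; rewrite -eq yb.
split => //; apply/subsetP => y; rewrite !inE => /andP[yv yb].
by move/subsetP: bsub => /(_ y yb); rewrite !inE (negPf yv).
Qed.

Lemma bad_count B k t lam (A1 A2 C Bd : {set X}) :
  (forall b, b \in B -> #|b| = k) ->
  (forall T : {set X}, #|T| = t -> #|[set b in B | T \subset b]| <= lam) ->
  independent B A1 -> independent B A2 -> C \subset A1 -> C \subset A2 ->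
  (forall v, v \in Bd -> v \notin A1 :|: A2 /\
     exists2 b, b \in B & (b \subset v |: A1) || (b \subset v |: A2)) ->
  #|Bd| * 'C(k.-1, t) <= lam * ('C(#|A1|, t) + ('C(#|A2|, t) - 'C(#|C|, t))).
Proof.
move=> Hk Hl I1 I2 CA1 CA2 HBd.
pose Fam (Y : {set X}) := [set T : {set X} | T \subset Y & #|T| == t].
pose TT := Fam A1 :|: (Fam A2 :\: Fam C).
have cardFam Y : #|Fam Y| = 'C(#|Y|, t) by rewrite cards_draws.
have FamS (Y Z : {set X}) : Y \subset Z -> Fam Y \subset Fam Z.
  move=> YZ; apply/subsetP => T; rewrite !inE => /andP[TY ->].
  by rewrite (subset_trans TY YZ).
have HTT : #|TT| <= 'C(#|A1|, t) + ('C(#|A2|, t) - 'C(#|C|, t)).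
  apply: leq_trans (leq_card_setU _ _) _.
  by rewrite cardFam leq_add2l cardsD (setIidPr (FamS _ _ CA2)) !cardFam.
pose w v := odflt set0 [pick b in B | (b \subset v |: A1) || (b \subset v |: A2)].
have wP v : v \in Bd ->
    [/\ w v \in B, v \in w v & (w v :\ v \subset A1) || (w v :\ v \subset A2)].
  move=> /HBd [vA [b0 b0B b0c]]; rewrite /w.
  case: pickP => [b /andP[bB bc]|/(_ b0)]; last by rewrite b0B b0c.
  rewrite /=; case/orP: bc => bsub.
    by case: (indep_add1 _ _ _ _ I1 bB bsub) => vb sb; rewrite sb.
  by case: (indep_add1 _ _ _ _ I2 bB bsub) => vb sb; rewrite sb orbT.
have w_inj : {in Bd &, injective w}.
  move=> v v' vB v'B eq; case: (wP v vB) => _ vw Hv; case: (wP v' v'B) => _ v'w _.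
  apply/eqP/negPn/negP => neq.
  have h : v' \in w v :\ v by rewrite in_setD1 eq_sym neq eq v'w.
  case: (HBd v' v'B) => nA _; move: nA; rewrite in_setU.
  by case/orP: Hv => /subsetP /(_ v' h) ->; rewrite ?orbT.
pose M := \sum_(v in Bd) \sum_(T in TT) ((T \subset w v :\ v) : nat).
have low : #|Bd| * 'C(k.-1, t) <= M.
  rewrite -sum_nat_const; apply: leq_sum => v vB.
  case: (wP v vB) => wB vw Hsub.
  have cw : #|w v :\ v| = k.-1 by rewrite -(Hk _ wB) (cardsD1 v (w v)) vw.
  rewrite -cw -cards_draws -/(Fam _) -sum1_card.
  have FT : Fam (w v :\ v) \subset TT.
    rewrite /TT; case/orP: Hsub => hs.
      by apply: subset_trans (subsetUl _ _); apply: FamS.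
    apply/subsetP => T; rewrite !inE => /andP[TD Tt].
    rewrite (subset_trans TD hs) Tt /= !andbT.
    case TA1: (T \subset A1) => //=; apply/negP => TC.
    by move: TA1; rewrite (subset_trans TC CA1).
  rewrite [X in _ <= X](big_setID (Fam (w v :\ v))) /= (setIidPr FT).
  apply: leq_trans (leq_addr _ _); apply: leq_sum => T; rewrite inE => /andP[-> _] //.
  have up : M <= #|TT| * lam.
    rewrite /M exchange_big /= -sum_nat_const; apply: leq_sum => T TTT.
    have Tt : #|T| = t.
      by move: TTT; rewrite !inE => /orP[/andP[_ /eqP]|/andP[_ /andP[_ /eqP]]].
    apply: leq_trans (Hl T Tt).
    pose P := [set v in Bd | T \subset w v].
    apply: (@leq_trans #|P|).
      rewrite -sum1_card [X in _ <= X]big_mkcond [X in X <= _]big_mkcond /=.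
      apply: leq_sum => v _; rewrite inE; case: (v \in Bd) => //=.
      case H: (T \subset w v :\ v) => //=.
      by rewrite (subset_trans H (subsetDl _ _)).
    rewrite -(card_in_imset (f := w)); last first.
      by move=> v v'; rewrite !inE => /andP[vB _] /andP[v'B _]; apply: w_inj.
    apply: subset_leq_card; apply/subsetP => b /imsetP[v]; rewrite inE => /andP[vB Tw] ->.
    by case: (wP v vB) => wB _ _; rewrite inE wB.
  apply: leq_trans low _; apply: leq_trans up _; by rewrite mulnC leq_mul2l HTT orbT.
Qed.

Definition mu (l s : nat) (S : 'I_s -> {set X}) := \sum_(j < s) (l.-1 - #|S j|).

Lemma buf_size l (S SL SR : {set X}) : buffered l S SL SR -> 0 < l ->
  #|SL| <= l.-1 /\ #|SR| <= l.-1.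
Proof.
case=> sL [sR [c1 [c2 c3]]] l0.
case: (leqP (#|S| + 2) l) => h1.
  by case: (c1 h1) => -> ->; split; lia.
case: (leqP (#|S| + 2) (2 * l)) => h2.
  by case: (c2 ltac:(lia) h2) => a [b _]; split; lia.
by case: (c3 ltac:(lia)) => a [b _]; split; lia.
Qed.

Lemma step B k t lam l s (S SL SR : 'I_s -> {set X}) (i : 'I_s) :
  (forall b, b \in B -> #|b| = k) ->
  (forall T : {set X}, #|T| = t -> #|[set b in B | T \subset b]| <= lam) ->
  2 <= l ->
  (forall (F Bd : {set X}), #|F| <= (l - 2) + 2 * (s - 1) * (l - 1) ->
     #|Bd| * 'C(k.-1, t) <= lam * (2 * 'C(2 * l - 3, t) - 'C(l - 2, t)) ->
     #|F :|: Bd| < #|X|) ->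
  presequencing l s B S SL SR -> deficient l (S i) ->
  exists S' SL' SR', presequencing l s B S' SL' SR' /\ mu l s S' < mu l s S.
Proof.
move=> Hk Hl l2 Hroom [Hbuf [Hdis [Hcov [Hind Hpair]]]] Hdef.
rewrite /deficient in Hdef.
have bs j := buf_size _ _ _ _ (Hbuf j) (ltnW l2).
pose p := ord_pred i.
have pS : ordS p = i := ord_predK i.
have [SLi SRi] : SL i = S i /\ SR i = S i.
  by case: (Hbuf i) => _ [_ [c1 _]]; apply: c1.
pose A1 := SR p :|: SL i.
pose A2 := SR i :|: SL (ordS i).
have I1 : independent B A1 by rewrite /A1 -pS; apply: Hpair.
have I2 : independent B A2 by apply: Hpair.
pose F := \bigcup_(j < s) (SL j :|: SR j).
pose Bd := [set v | (v \notin A1 :|: A2) &&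
   [exists b in B, (b \subset v |: A1) || (b \subset v |: A2)]].
have subF j : SL j :|: SR j \subset F by apply: (bigcup_sup j).
have hF : #|F| <= (l - 2) + 2 * (s - 1) * (l - 1).
  apply: leq_trans (card_bigcup_le _ _ _) _.
  rewrite (bigD1 i) //= SLi SRi setUid.
  apply: leq_add; first lia.
  apply: leq_trans (_ : \sum_(j < s | j != i) (2 * (l - 1)) <= _).
    apply: leq_sum => j _; apply: leq_trans (leq_card_setU _ _) _.
    case: (bs j) => a b; lia.
  rewrite sum_nat_const cardC1 card_ord; lia.
have hA1 : #|A1| <= (l - 2) + (l - 1).
  apply: leq_trans (leq_card_setU _ _) _; rewrite SLi; case: (bs p) => _ b; lia.
have hA2 : #|A2| <= #|S i| + (l - 1).
  apply: leq_trans (leq_card_setU _ _) _; rewrite SRi; case: (bs (ordS i)) => b _; lia.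
have hBd : #|Bd| * 'C(k.-1, t) <= lam * (2 * 'C(2 * l - 3, t) - 'C(l - 2, t)).
  have CA1 : S i \subset A1 by rewrite /A1 SLi subsetUr.
  have CA2 : S i \subset A2 by rewrite /A2 SRi subsetUl.
  apply: leq_trans (bad_count _ _ _ _ _ _ _ _ Hk Hl I1 I2 CA1 CA2 _) _.
    move=> v; rewrite inE => /andP[-> /existsP[b /andP[bB bc]]]; split=> //.
    by exists b.
  rewrite leq_mul2l; apply/orP; right.
  have e : 2 * l - 3 = (l - 2) + (l - 1) by lia.
  have h1 := leq_bin2l t hA1.
  have h2 := binC_diff _ _ _ _ t (_ : #|S i| <= l - 2) hA2.
  have h3 := leq_bin2l t (_ : l - 2 <= 2 * l - 3).
  rewrite e; rewrite e in h3.
  have := h2 ltac:(lia); have := h3 ltac:(lia); lia.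
have [x xF] : exists x, x \notin F :|: Bd.
  case: (pickP (fun x => x \notin F :|: Bd)) => [x Hx | none]; first by exists x.
  have : F :|: Bd = setT.
    by apply/setP => y; rewrite in_setT; move: (none y) => /= /negbFE.
  by move=> e; move: (Hroom F Bd hF hBd); rewrite e cardsT ltnn.
move: xF; rewrite in_setU negb_or => /andP[xF xBd].
have xA : x \notin A1 :|: A2.
  apply/negP => xA; move/negP: xF; apply.
  move: xA; rewrite in_setU => /orP[] xA.
    move: xA; rewrite in_setU => /orP[] xA.
      by apply: (subsetP (subF p)); rewrite in_setU xA orbT.
    by apply: (subsetP (subF i)); rewrite in_setU xA.
  move: xA; rewrite in_setU => /orP[] xA.
    by apply: (subsetP (subF i)); rewrite in_setU xA orbT.
  by apply: (subsetP (subF (ordS i))); rewrite in_setU xA.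
have Ix1 : independent B (x |: A1).
  move=> b bB; apply/negP => bs1; move/negP: xBd; apply.
  by rewrite inE xA /=; apply/existsP; exists b; rewrite bB bs1.
have Ix2 : independent B (x |: A2).
  move=> b bB; apply/negP => bs1; move/negP: xBd; apply.
  by rewrite inE xA /=; apply/existsP; exists b; rewrite bB bs1 orbT.
have xnL j : x \notin SL j.
  by apply/negP => h; move/negP: xF; apply; apply: (subsetP (subF j)); rewrite in_setU h.
have xnR j : x \notin SR j.
  by apply/negP => h; move/negP: xF; apply; apply: (subsetP (subF j)); rewrite in_setU h orbT.
have xSi : x \notin S i by rewrite -SLi.
have big j : x \in S j -> 2 * l <= #|S j| + 1.
  move=> xj; case: (Hbuf j) => _ [_ [c1 [c2 _]]].
  case: (leqP (#|S j| + 2) l) => h1.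
    by case: (c1 h1) => e _; move: (xnL j); rewrite e xj.
  case: (leqP (#|S j| + 2) (2 * l)) => h2; last lia.
  case: (c2 ltac:(lia) h2) => _ [_ e].
  by move: (xnL j) (xnR j); rewrite -e in xj; rewrite in_setU in xj; case/orP: xj => ->.
pose S' j := if j == i then x |: S i else S j :\ x.
pose SL' j := if j == i then x |: S i else SL j.
pose SR' j := if j == i then x |: S i else SR j.
have cSi : #|x |: S i| = #|S i| + 1 by rewrite cardsU1 xSi addnC.
exists S', SL', SR'; split; first split.
- move=> j; rewrite /S' /SL' /SR'; case: eqVneq => [_|ne].
    split; first exact: subxx. split; first exact: subxx. split; first by [].
    rewrite cSi; split.
      by move=> h1 h2; split; [lia|split; [lia|exact: setUid]].
    by move=> h; lia.
  case xj: (x \in S j).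
    have hb := big j xj.
    have c : #|S j :\ x| + 1 = #|S j| by rewrite [RHS](cardsD1 x (S j)) xj addnC.
    case: (Hbuf j) => sL [sR [_ [_ c3]]]; case: (c3 hb) => eL [eR dLR].
    have sub1 : SL j \subset S j :\ x.
      apply/subsetP => y yL; rewrite in_setD1 (subsetP sL _ yL) andbT.
      by apply/eqP => e; move: (xnL j); rewrite -e yL.
    have sub2 : SR j \subset S j :\ x.
      apply/subsetP => y yL; rewrite in_setD1 (subsetP sR _ yL) andbT.
      by apply/eqP => e; move: (xnR j); rewrite -e yL.
    split => //; split => //; split; first by move=> h; lia.
    split; last by move=> h.
    move=> h1 h2; split => //; split => //.
    have e0 : SL j :&: SR j = set0 by apply/eqP; rewrite setI_eq0.
    apply/eqP; rewrite eqEcard subUset sub1 sub2 /= cardsU e0 cards0 subn0.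
    lia.
  have e : S j :\ x = S j.
    by apply/setP => y; rewrite in_setD1; case: eqVneq => // ->; rewrite xj.
  by rewrite e; exact: Hbuf j.
split.
- move=> j j' ne; rewrite /S'.
  case: (eqVneq j i) => [ej|nj]; case: (eqVneq j' i) => [ej'|nj'].
  + by move: ne; rewrite ej ej' eqxx.
  + have d := Hdis i j' ltac:(by rewrite -ej).
    rewrite -setI_eq0; apply/eqP/setP => y; rewrite !inE.
    case: (eqVneq y x) => //= _; case yi: (y \in S i) => //=.
    by rewrite (disjointFr d yi).
  + have d := Hdis j i ltac:(by rewrite -ej').
    rewrite -setI_eq0; apply/eqP/setP => y; rewrite !inE.
    case: (eqVneq y x) => //= _; case yi: (y \in S i) => //=; rewrite ?andbF //.
    by rewrite (disjointFl d yi).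
  + exact: disjointW (subsetDl _ _) (subsetDl _ _) (Hdis j j' ne).
split.
- apply/setP => y; rewrite in_setT; apply/bigcupP.
  case: (eqVneq y x) => [->|nyx].
    by exists i => //; rewrite /S' eqxx setU11.
  have : y \in \bigcup_(j < s) S j by rewrite Hcov in_setT.
  case/bigcupP => j _ yj; exists j => //; rewrite /S'.
  by case: eqVneq => [e|_]; [rewrite setU1r // -e | rewrite in_setD1 nyx yj].
split.
- move=> j; rewrite /S'; case: eqVneq => [_|_].
    by apply: (indep_sub _ _ _ Ix2); apply: setUS; rewrite /A2 SRi subsetUl.
  by apply: (indep_sub _ _ _ (Hind j)); exact: subsetDl.
- move=> j; rewrite /SR' /SL'.
  case: (eqVneq j i) => [->|nj].
    case: (eqVneq (ordS i) i) => [_|_].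
      by apply: (indep_sub _ _ _ Ix2); rewrite setUid; apply: setUS; rewrite /A2 SRi subsetUl.
    by apply: (indep_sub _ _ _ Ix2); rewrite /A2 SRi setUA.
  case: (eqVneq (ordS j) i) => [e|_]; last exact: Hpair j.
  have ejp : j = p by apply: ordS_inj; rewrite e pS.
  by apply: (indep_sub _ _ _ Ix1); rewrite /A1 ejp SLi setUCA.
rewrite /mu (bigD1 i) //= [X in _ < X](bigD1 i) //= /S' eqxx -addSn.
apply: leq_add; first by rewrite cSi; lia.
apply: leq_sum => j nj; rewrite (negPf nj).
have := cardsD1 x (S j); case xj: (x \in S j); last by move=> ->.
have := big j xj; lia.
Qed.

Lemma exists_nondef B k t lam l s
  (Hk : forall b, b \in B -> #|b| = k)
  (Hl : forall T : {set X}, #|T| = t -> #|[set b in B | T \subset b]| <= lam)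
  (l2 : 2 <= l)
  (Hroom : forall (F Bd : {set X}), #|F| <= (l - 2) + 2 * (s - 1) * (l - 1) ->
     #|Bd| * 'C(k.-1, t) <= lam * (2 * 'C(2 * l - 3, t) - 'C(l - 2, t)) ->
     #|F :|: Bd| < #|X|) m :
  forall S SL SR : 'I_s -> {set X}, mu l s S <= m -> presequencing l s B S SL SR ->
  exists S' SL' SR' : 'I_s -> {set X}, nondeficient_presequencing l s B S' SL' SR'.
Proof.
elim: m => [|m IH] S SL SR hmu hp;
  (case: (boolP [exists i, deficient l (S i)]) => [/existsP[i hi]|hnd];
   last by exists S, SL, SR; split => //; move/existsPn: hnd).
  by case: (step B k t lam l s S SL SR i Hk Hl l2 Hroom hp hi) => S' [SL' [SR' [_ lt]]]; lia.
case: (step B k t lam l s S SL SR i Hk Hl l2 Hroom hp hi) => S' [SL' [SR' [hp' lt]]].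
by apply: (IH S' SL' SR') => //; lia.
Qed.
End S.

From mathcomp Require Import lra.

Theorem lemma6 (X : finType) (n k t lam l s : nat) (B : {set {set X}}) :
  0 < n -> 0 < k -> 0 < t -> 0 < lam -> k <= n -> t < k -> 2 <= t ->
  0 < l -> 0 < s ->
  partial_system n k t lam B ->
  ((n%:R : rat) >
     lam%:R * (2 * ('C(2 * l - 3, t))%:R - ('C(l - 2, t))%:R)
       / ('C(k - 1, t))%:R
     + ((2 * s - 1) * (l - 1))%:R - 1)%R ->
  (exists (S SL SR : 'I_s -> {set X}), presequencing l s B S SL SR) ->
  exists (S SL SR : 'I_s -> {set X}), nondeficient_presequencing l s B S SL SR.
Proof.
move=> n0 k0 t0 lam0 kn tk t2 l0 s0 [Hn [Hk Hl]] Hrat [S [SL [SR hp]]].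
case: (leqP l 1) => hl.
  by exists S, SL, SR; split => // i; rewrite /deficient -ltnNge; lia.
apply: (exists_nondef X B k t lam l s Hk Hl hl _ _ S SL SR (leqnn _) hp).
move=> F Bd hF hBd; rewrite Hn.
apply: leq_ltn_trans (leq_card_setU F Bd) _.
have ek : k.-1 = k - 1 by lia.
rewrite ek in hBd.
set C1 := 'C(2 * l - 3, t) in Hrat hBd.
set C2 := 'C(l - 2, t) in Hrat hBd.
set Ck := 'C(k - 1, t) in Hrat hBd.
have Ck0 : 0 < Ck by rewrite bin_gt0; lia.
have C21 : C2 <= 2 * C1.
  apply: leq_trans (leq_bin2l t (_ : l - 2 <= 2 * l - 3)) _; first lia.
  by rewrite -/C1; lia.
have eN : (2 * s - 1) * (l - 1) = ((l - 2) + 2 * (s - 1) * (l - 1)) + 1.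
  have -> : 2 * s - 1 = (s - 1) * 2 + 1 by lia.
  rewrite mulnDl mul1n; lia.
rewrite eN natrD in Hrat.
set N0 := (l - 2) + 2 * (s - 1) * (l - 1) in Hrat hF.
rewrite -(ltr_nat rat) natrD.
have hF' : ((#|F|%:R : rat) <= N0%:R)%R by rewrite ler_nat.
have hB' : (((#|Bd| * Ck)%:R : rat) <= (lam * (2 * C1 - C2))%:R)%R by rewrite ler_nat.
rewrite natrM natrM natrB // natrM in hB'.
have hB : ((#|Bd|%:R : rat) <= lam%:R * (2%:R * C1%:R - C2%:R) / Ck%:R)%R.
  by rewrite ler_pdivlMr ?ltr0n.
move: Hrat hB hF'.
move=> *; lra.
Qed.
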